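(* Let $f(x)=\frac1n\sum_{i=1}^nf_i(x)$ on $\mathbb{R}$ with $f_i(x)=\frac{a_i}2(x-x_i^* )^2$, $a_i>0$, $x_i^*\in\mathbb{R}$. Consider SGD $x^{k+1}=x^k-\gamma_kf_{i_k}'(x^k)$, where $i_k$ is sampled uniformly from $[n]$ independently at each iteration, with stepsize $\gamma_k=\frac{f_{i_k}(x^k)-f_{i_k}^*}{c_k|f_{i_k}'(x^k)|^2}$ (where $f_i^*=\inf f_i=0$) and $c_k=(k+1)/2$. Then $\mathbb{E}|x^{k+1}-\tilde x|^2=\mathcal O(1/k)$, where $\tilde x=\frac1n\sum_{i=1}^nx_i^*$; in general $\tilde x$ differs from the minimizer $x^*=\frac{\sum_{i=1}^na_ix_i^*}{\sum_{i=1}^na_i}$ of $f$.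
   Context: When $f'_{i_k}(x^k)=0$ the iterate is not updated. *)

(* Defs.v *)
From mathcomp Require Import all_boot all_order all_algebra.
Set Implicit Arguments. Unset Strict Implicit. Unset Printing Implicit Defensive.
Import Order.TTheory GRing.Theory Num.Theory.
Local Open Scope ring_scope.

Section SGD.
Variables (R : realFieldType) (n : nat) (a xs : 'I_n -> R).

Definition fi (i : 'I_n) (x : R) : R := a i / 2 * (x - xs i) ^+ 2.
Definition dfi (i : 'I_n) (x : R) : R := a i * (x - xs i).
Definition fistar (i : 'I_n) : R := 0.
Definition favg (x : R) : R := n%:R^-1 * \sum_(i < n) fi i x.
Definition xtilde : R := n%:R^-1 * \sum_(i < n) xs i.
Definition ck (k : nat) : R := k.+1%:R / 2.
Definition gammak (k : nat) (i : 'I_n) (x : R) : R :=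
  (fi i x - fistar i) / (ck k * `|dfi i x| ^+ 2).
Definition sgd_step (k : nat) (i : 'I_n) (x : R) : R :=
  if dfi i x == 0 then x else x - gammak k i x * dfi i x.

Fixpoint sgd_run (k : nat) (x : R) (s : seq 'I_n) : R :=
  match s with
  | [::] => x
  | i :: s' => sgd_run k.+1 (sgd_step k i x) s'
  end.

(* E |x^{k+1} - xtilde|^2, where i_0,...,i_k are i.i.d. uniform on [n]:
   average over all (k+1)-tuples of indices. *)
Definition sgd_msd (x0 : R) (k : nat) : R :=
  (n%:R ^+ k.+1)^-1 *
  \sum_(t : (k.+1).-tuple 'I_n) `|sgd_run 0 x0 t - xtilde| ^+ 2.

End SGD.

(* Main.v *)
Require Import Defs.
From mathcomp Require Import all_boot all_order all_algebra.
From mathcomp Require Import ring lra.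
Set Implicit Arguments. Unset Strict Implicit. Unset Printing Implicit Defensive.
Import Order.TTheory GRing.Theory Num.Theory.
Local Open Scope ring_scope.

Section H.
Variables (R : realFieldType) (n : nat) (a xs : 'I_n -> R).
Hypothesis apos : forall i, 0 < a i.

Lemma step_eq k i x : sgd_step a xs k i x = x - (x - xs i) / k.+1%:R.
Proof.
rewrite /sgd_step /gammak /dfi /fi /fistar /ck.
have an : a i != 0 by rewrite gt_eqF.
case: eqP => [/eqP|/eqP] h.
  move: h; rewrite mulf_eq0 (negbTE an) /= subr_eq0 => /eqP ->.
  by rewrite subrr mul0r subr0.
have hx : x - xs i != 0 by move: h; rewrite mulf_eq0 negb_or => /andP[].
rewrite real_normK ?num_real //.
have k0 : (k.+1%:R : R) != 0 by rewrite pnatr_eq0.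
congr (_ - _); field.
by rewrite hx an addrC natr1 k0.
Qed.

Lemma run_rcons k x s i :
  sgd_run a xs k x (rcons s i) = sgd_step a xs (k + size s) i (sgd_run a xs k x s).
Proof.
elim: s k x => [|j s IH] k x /=; first by rewrite addn0.
by rewrite IH addSnnS.
Qed.

Lemma sum_tuple_rcons m (F : (m.+1).-tuple 'I_n -> R) :
  \sum_(t : (m.+1).-tuple 'I_n) F t =
  \sum_(t : m.-tuple 'I_n) \sum_(i : 'I_n) F [tuple of rcons t i].
Proof.
rewrite pair_big /=.
pose h := fun p : m.-tuple 'I_n * 'I_n => [tuple of rcons p.1 p.2].
rewrite (reindex h) //.
exists (fun t : (m.+1).-tuple 'I_n =>
   ([tuple of belast (thead t) (behead_tuple t)], last (thead t) (behead t))).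
  move=> [t i] _; rewrite /h /=.
  set u := [tuple of rcons t i].
  have e : (u : seq _) = rcons (belast (thead u) (behead u)) (last (thead u) (behead u)).
    by rewrite -lastI; exact: (congr1 val (tuple_eta u)).
  case: (rcons_inj e) => e1 e2.
  by congr (_, _) => //; apply: val_inj.
move=> t _; apply: val_inj; rewrite /h /=.
case/tupleP: t => x t /=.
by rewrite -lastI.
Qed.

Hypothesis npos : (0 < n)%N.
Variable x0 : R.

Definition Q m := \sum_(t : m.-tuple 'I_n) (sgd_run a xs 0 x0 t - xtilde xs) ^+ 2.
Definition S := \sum_(i < n) (xs i - xtilde xs) ^+ 2.

Lemma sumy : \sum_(i < n) (xs i - xtilde xs) = 0.
Proof.
rewrite sumrB sumr_const card_ord /xtilde -mulrnAl -mulr_natl mulfV ?mul1r ?subrr //.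
by rewrite pnatr_eq0 -lt0n.
Qed.

Lemma Qrec m : Q m.+1 =
  ((m%:R) ^+ 2 * n%:R * Q m + n%:R ^+ m * S) / (m.+1%:R) ^+ 2.
Proof.
rewrite /Q sum_tuple_rcons.
have k0 : (m.+1%:R : R) != 0 by rewrite pnatr_eq0.
set c := ((m.+1%:R : R) ^+ 2)^-1.
have inner : forall t : m.-tuple 'I_n,
  \sum_(i < n) (sgd_run a xs 0 x0 [tuple of rcons t i] - xtilde xs) ^+ 2 =
  c * (m%:R ^+ 2 * n%:R * (sgd_run a xs 0 x0 t - xtilde xs) ^+ 2) + c * S.
  move=> t.
  set D := sgd_run a xs 0 x0 t - xtilde xs.
  have e : forall i, (sgd_run a xs 0 x0 [tuple of rcons t i] - xtilde xs) ^+ 2 =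
     c * (m%:R ^+ 2 * D ^+ 2) + c * (2 * m%:R * D) * (xs i - xtilde xs)
       + c * (xs i - xtilde xs) ^+ 2.
    move=> i; rewrite /= run_rcons step_eq add0n size_tuple /c /D.
    field; by rewrite addrC natr1.
  rewrite (eq_bigr _ (fun i _ => e i)) !big_split /= sumr_const card_ord.
  have -> : \sum_(i < n) c * (2 * m%:R * D) * (xs i - xtilde xs) =
     c * (2 * m%:R * D) * \sum_(i < n) (xs i - xtilde xs) by rewrite mulr_sumr.
  have -> : \sum_(i < n) c * (xs i - xtilde xs) ^+ 2 = c * S by rewrite mulr_sumr.
  rewrite sumy mulr0 addr0 -mulr_natr; ring.
rewrite (eq_bigr _ (fun t _ => inner t)) big_split /= sumr_const card_tuple card_ord.
have -> : \sum_(t : m.-tuple 'I_n)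
   c * (m%:R ^+ 2 * n%:R * (sgd_run a xs 0 x0 t - xtilde xs) ^+ 2) =
   c * (m%:R ^+ 2 * n%:R) * \sum_(t : m.-tuple 'I_n) (sgd_run a xs 0 x0 t - xtilde xs) ^+ 2.
  by rewrite mulr_sumr; apply: eq_bigr => t _; ring.
rewrite -[c * S *+ _]mulr_natr natrX; ring.
Qed.

Lemma Qclosed m : Q m.+1 = n%:R ^+ m * S / m.+1%:R.
Proof.
elim: m => [|m IH].
  by rewrite Qrec /=; field.
rewrite Qrec IH.
have k0 : (m%:R + 1 : R) != 0 by rewrite natr1 pnatr_eq0.
have k1 : (m%:R + 2 : R) != 0 by rewrite -natrD addn2 pnatr_eq0.
rewrite [n%:R ^+ m.+1]exprS -[m.+2]addn2 -[m.+1]addn1 !natrD.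
field; by rewrite k0 k1.
Qed.
End H.
Lemma part2 (R : realFieldType) :
  (exists (n : nat) (a xs : 'I_n -> R),
     (forall i, 0 < a i) /\
     exists xmin : R, (forall y, favg a xs xmin <= favg a xs y) /\
                      xmin <> xtilde xs).
Proof.
exists 2%N, (fun i => (val i).+1%:R), (fun i => (val i)%:R).
split; first by move=> i; rewrite ltr0n.
exists (2 / 3); split.
  move=> y; rewrite /favg /fi !big_ord_recr !big_ord0 /=.
  have := sqr_ge0 (y - 2 / 3).
  nra.
rewrite /xtilde !big_ord_recr !big_ord0 /=.
move/eqP; apply/negP.
rewrite -subr_eq0.
have -> : (2 / 3 - 2^-1 * (0 + 0 + 1) : R) = 1 / 6 by field.
by rewrite mul1r invr_eq0 pnatr_eq0.
Qed.

Unset Implicit Arguments.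
Theorem proposition4 (R : realFieldType) :
  (forall (n : nat) (a xs : 'I_n -> R) (x0 : R),
     (0 < n)%N -> (forall i, 0 < a i) ->
     exists C : R, forall k : nat, (0 < k)%N ->
       sgd_msd a xs x0 k <= C / k%:R)
  /\
  (exists (n : nat) (a xs : 'I_n -> R),
     (forall i, 0 < a i) /\
     exists xmin : R, (forall y, favg a xs xmin <= favg a xs y) /\
                      xmin <> xtilde xs).
Proof.
split; last exact: part2.
move=> n a xs x0 npos apos.
exists (S xs / n%:R) => k kpos.
have e : sgd_msd a xs x0 k = S xs / n%:R / k.+1%:R.
  rewrite /sgd_msd.
  have -> : \sum_(t : (k.+1).-tuple 'I_n) `|sgd_run a xs 0 x0 t - xtilde xs| ^+ 2
     = Q a xs x0 k.+1.
    by apply: eq_bigr => t _; rewrite real_normK ?num_real.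
  rewrite Qclosed //.
  have n0 : (n%:R : R) != 0 by rewrite pnatr_eq0 -lt0n.
  have k0 : (k%:R + 1 : R) != 0 by rewrite natr1 pnatr_eq0.
  rewrite exprS -[k.+1]addn1 natrD.
  field; by rewrite n0 k0 expf_neq0.
rewrite e.
have S0 : 0 <= S xs / n%:R.
  by rewrite divr_ge0 ?ler0n // /S sumr_ge0 // => i _; exact: sqr_ge0.
rewrite ler_wpM2l // lef_pV2 ?posrE ?ltr0n // ler_nat leqnSn //.
Qed.
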